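(* Let $\mathcal F$ be a proper filter on $\omega$ and consider the game $\mathfrak G(\mathcal F,[\omega]^{<\omega},\mathcal F)$. Then (1) player I has no winning strategy if and only if $\mathcal F$ is a non-meager P-filter; (2) player II never has a winning strategy.
   Context: A filter on $\omega$ is a family $\mathcal F\subseteq\mathcal P(\omega)$ closed under finite intersections and supersets and containing all cofinite sets; it is proper if all its members are infinite. $\mathcal P(\omega)$ is identified with $2^\omega$ with the product topology; ''meager'' refers to this topology. $\mathcal F$ is a P-filter if for every sequence $\langle X_n\rangle\subseteq\mathcal F$ there is $X\in\mathcal F$ with $X\setminus X_n$ finite for all $n$. Game $\mathfrak G(\mathcal X,[\omega]^{<\omega},\mathcal Z)$: at each stage $k\in\omega$, player I chooses $X_k\in\mathcal X$ and player II responds with a nonempty finite set $s_k\subseteq X_k$; II wins if $\bigcup_k s_k\in\mathcal Z$, otherwise I wins. *)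

(* Defs.v *)
From HB Require Import structures.
From mathcomp Require Import all_boot all_order all_algebra.
From mathcomp Require Import all_classical all_reals topology cantor.
Set Implicit Arguments. Unset Strict Implicit. Unset Printing Implicit Defensive.
Local Open Scope classical_set_scope.

Definition is_filter_omega (F : set (set nat)) : Prop :=
  [/\ (forall A B, F A -> F B -> F (A `&` B)),
      (forall A B, F A -> A `<=` B -> F B) &
      (forall A, finite_set (~` A) -> F A)].

Definition proper_filter_omega (F : set (set nat)) : Prop :=
  is_filter_omega F /\ (forall A, F A -> infinite_set A).

Definition P_filter (F : set (set nat)) : Prop :=
  forall Xn : nat -> set nat, (forall n, F (Xn n)) ->
    exists2 X, F X & forall n, finite_set (X `\` Xn n).

(* Topology: P(omega) identified with 2^omega via characteristic functions. *)
Definition char_of (A : set nat) : cantor_space := fun n => `[< A n >].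

Definition nowhere_dense (T : topologicalType) (A : set T) : Prop :=
  (closure A)° = set0.

Definition meager (T : topologicalType) (A : set T) : Prop :=
  exists N : nat -> set T, (forall n, nowhere_dense (N n)) /\
    A `<=` \bigcup_n N n.

Definition meager_family (F : set (set nat)) : Prop :=
  meager (char_of @` F).

(* The game G(F, [omega]^<omega, F).  At stage k player I plays X_k in F,
   player II answers a nonempty finite s_k ⊆ X_k; II wins iff the union of
   the s_k is in F. *)

(* A strategy for player I: given II's previous moves s_0..s_{k-1},
   returns I's move X_k, which must be in F. *)
Definition I_strategy (F : set (set nat)) (sigma : seq (set nat) -> set nat) :=
  forall h, F (sigma h).

Definition II_legal_vs (sigma : seq (set nat) -> set nat) (s : nat -> set nat) :=
  forall k, [/\ finite_set (s k), s k !=set0 & s k `<=` sigma (mkseq s k)].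

Definition I_winning_strategy (F : set (set nat)) (sigma : seq (set nat) -> set nat) :=
  I_strategy F sigma /\
  forall s, II_legal_vs sigma s -> ~ F (\bigcup_k s k).

(* A strategy for player II: given I's moves X_0..X_k (the list mkseq X k.+1,
   whose last element is the current move X_k), returns II's answer s_k. *)
Definition II_legal_move (s X : set nat) : Prop :=
  [/\ finite_set s, s !=set0 & s `<=` X].

Definition II_strategy (F : set (set nat)) (tau : seq (set nat) -> set nat) :=
  forall X : nat -> set nat, (forall n, F (X n)) ->
    forall k, II_legal_move (tau (mkseq X k.+1)) (X k).

Definition II_winning_strategy (F : set (set nat)) (tau : seq (set nat) -> set nat) :=
  II_strategy F tau /\
  forall X : nat -> set nat, (forall n, F (X n)) ->
    F (\bigcup_k tau (mkseq X k.+1)).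

(* Main.v *)
Require Import Defs.
From mathcomp Require Import all_boot all_classical topology cantor.
From HB Require Import structures.
From mathcomp Require Import all_order all_algebra all_reals.
Set Implicit Arguments. Unset Strict Implicit. Unset Printing Implicit Defensive.
Local Open Scope classical_set_scope.
Definition cyl (b : cantor_space) (n : nat) : set cantor_space :=
  [set c | forall i, (i < n)%N -> c i = b i].

Lemma cyl_nbhs (b : cantor_space) n : nbhs b (cyl b n).
Proof.
elim: n => [|n IH]; first by near=> z => i; rewrite ltn0.
have h : nbhs b (proj n @^-1` [set b n] : set cantor_space).
  apply: open_nbhs_nbhs; split => //.
  apply: open_comp; [move=> + _; exact: proj_continuous| apply: discrete_open].
apply: filterS (filterI IH h) => c [Hc Hn] i; rewrite ltnS leq_eqVlt => /predU1P[->|/Hc] //.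
Unshelve. all: end_near. Qed.

Lemma nbhs_cyl (b : cantor_space) (A : set cantor_space) :
  nbhs b A -> exists n, cyl b n `<=` A.
Proof.
pose G : set_system cantor_space := filter_from [set: nat] (cyl b).
have FG : Filter G.
  apply: filter_from_filter; first by exists 0%N.
  move=> i j _ _; exists (maxn i j) => // c Hc; split => k Hk; apply: Hc.
    by rewrite (leq_trans Hk) // leq_maxl.
  by rewrite (leq_trans Hk) // leq_maxr.
have : G --> b.
  apply/cvg_sup => i A' /=.
  idtac.
  move=> [B [[C Cop CB] Bb] BA]; rewrite -CB in Bb BA.
  exists i.+1 => // c Hc; apply: BA => /=.
  by rewrite Hc.

move=> /(_ A) H /H [n _ sub]; by exists n.
Qed.

Lemma ND1 (N : set cantor_space) : nowhere_dense N ->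
  forall b n, exists y m, [/\ cyl b n y, (n <= m)%N &
    forall c, cyl y m c -> ~ N c].
Proof.
move=> ND b n.
have nsub : ~ (cyl b n `<=` closure N).
  move=> sub; have : (closure N)° b by exact: filterS sub (cyl_nbhs b n).
  by rewrite ND.
have [y [cy ncy]] : exists y, cyl b n y /\ ~ closure N y.
  apply: contrapT => nex; apply: nsub => y cy; apply: contrapT => nc.
  by apply: nex; exists y.
have [B [nB hB]] : exists B, nbhs y B /\ ~ (N `&` B !=set0).
  apply: contrapT => nex; apply: ncy => B nB; apply: contrapT => h.
  by apply: nex; exists B.
have [m sub] := nbhs_cyl nB.
exists y, (maxn n m); split => //; first exact: leq_maxl.
move=> c cc Nc; apply: hB; exists c; split => //; apply: sub => i im.
by apply: cc; rewrite (leq_trans im) // leq_maxr.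
Qed.

Definition agree (x y : nat -> bool) a b :=
  forall i, (a <= i < b)%N -> x i = y i.

Lemma ext_step (N : set cantor_space) (ND : nowhere_dense N)
  (t : nat -> bool) m b (u : nat -> bool) : (m <= b)%N ->
  exists b' u', [/\ (b <= b')%N, agree u' u m b &
    forall C : cantor_space, agree C t 0 m -> agree C u' m b' -> ~ N C].
Proof.
move=> mb.
pose x0 : cantor_space := fun i => if (i < m)%N then t i else u i.
have [y [m' [cy bm' hy]]] := ND1 ND x0 b.
exists m', y; split => //.
  by move=> i /andP[mi ib]; rewrite cy // /x0 ltnNge mi.
move=> C Ct Cy; apply: hy => i im'.
case: (ltnP i m) => im.
  by rewrite Ct // cy ?(leq_trans im mb) // /x0 im.
by apply: Cy; rewrite im.
Qed.

Definition pat m (t : m.-tuple bool) : nat -> bool := fun i => nth false t i.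

Lemma avoid_list (N : nat -> set cantor_space)
  (ND : forall n, nowhere_dense (N n)) m
  (L : seq (nat * m.-tuple bool)) :
  exists b u, (m <= b)%N /\ forall p, p \in L -> forall C : cantor_space,
    agree C (pat p.2) 0 m -> agree C u m b -> ~ N p.1 C.
Proof.
elim: L => [|p L [b [u [mb IH]]]]; first by exists m, (fun=> false).
have [b' [u' [bb' uu' H]]] := ext_step (ND p.1) (pat p.2) u mb.
exists b', u'; split; first exact: leq_trans bb'.
move=> q; rewrite inE => /predU1P[->|qL] C Ct Cu.
  exact: H Ct Cu.
apply: (IH q qL C Ct) => i /andP[mi ib].
by rewrite Cu ?uu' ?mi ?ib // (leq_trans ib bb').
Qed.

Lemma avoid_all (N : nat -> set cantor_space)
  (ND : forall n, nowhere_dense (N n)) m k :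
  exists b u, (m <= b)%N /\ forall C : cantor_space, agree C u m b ->
    forall n, (n <= k)%N -> ~ N n C.
Proof.
have [b [u [mb H]]] := avoid_list ND
  [seq (n, t) | n <- iota 0 k.+1, t <- enum {: m.-tuple bool}].
exists b, u; split => // C Cu n nk.
pose t := [tuple of mkseq C m].
have := H (n, t); apply => //.
  by apply: allpairs_f; rewrite ?mem_iota ?mem_enum //= add0n ltnS.
by move=> i /andP[_ im]; rewrite /pat /= nth_mkseq.
Qed.
Section Basics.
Variable F : set (set nat).
Hypothesis HF : proper_filter_omega F.

Lemma F_sup A B : F A -> A `<=` B -> F B.
Proof. by have [[_ h _] _] := HF; apply: h. Qed.
Lemma F_I A B : F A -> F B -> F (A `&` B).
Proof. by have [[h _ _] _] := HF; apply: h. Qed.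
Lemma F_cof A : finite_set (~` A) -> F A.
Proof. by have [[_ _ h] _] := HF; apply: h. Qed.
Lemma F_inf A : F A -> infinite_set A.
Proof. by have [_ h] := HF; apply: h. Qed.
Lemma F_not0 : ~ F set0.
Proof. by move=> /F_inf; apply; exact: finite_set0. Qed.
Lemma F_T : F setT.
Proof. by apply: F_cof; rewrite setCT; exact: finite_set0. Qed.
End Basics.

Lemma seq_bound (s : seq nat) : exists m, forall x, x \in s -> (x < m)%N.
Proof.
elim: s => [|a s [m IH]]; first by exists 0%N.
exists (maxn a.+1 m) => x; rewrite inE => /predU1P[->|/IH xm].
  by rewrite leq_max leqnn.
by rewrite leq_max xm orbT.
Qed.

Lemma fin_bound (A : set nat) : finite_set A ->
  exists m, forall x, A x -> (x < m)%N.
Proof.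
move=> /finite_seqP[s ->]; have [m H] := seq_bound s.
by exists m => x /= xs; apply: H.
Qed.

Lemma hist_bound (h : seq (set nat)) : exists m, forall i, (i < size h)%N ->
  finite_set (nth set0 h i) -> forall x, nth set0 h i x -> (x < m)%N.
Proof.
elim: h => [|S h [m' IH]]; first by exists 0%N.
have [m0 H0] : exists m0, finite_set S -> forall x, S x -> (x < m0)%N.
  case: (pselect (finite_set S)) => [fS|nfS]; last by exists 0%N.
  by have [m0 H] := fin_bound fS; exists m0.
exists (maxn m0 m') => -[|i] /= ilt fi x hx.
  by rewrite leq_max (H0 fi x hx).
by rewrite leq_max (IH i ilt fi x hx) orbT.
Qed.

Lemma meager_Iwin F : proper_filter_omega F -> meager_family F ->
  exists sigma, I_winning_strategy F sigma.
Proof.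
move=> HF [N [ND FN]].
have [mh Hmh] := choice hist_bound.
have [bu Hbu] := choice (fun mk : nat * nat => avoid_all ND mk.1 mk.2).
pose bb m k := bu (m, k).
pose uu m k := projT1 (cid (Hbu (m, k))).
have Huu m k : (m <= bb m k)%N /\ (forall C : cantor_space,
   agree C (uu m k) m (bb m k) -> forall n, (n <= k)%N -> ~ N n C).
  exact: (projT2 (cid (Hbu (m, k)))).
pose sigma h := [set x | (bb (mh h) (size h) <= x)%N].
exists sigma; split.
  move=> h; apply: (F_cof HF); apply: (@sub_finite_set _ _ `I_(bb (mh h) (size h))).
    by move=> x /= /negP; rewrite -ltnNge.
  exact: finite_II.
move=> s Hs FU.
pose M k := mh (mkseq s k); pose B k := bb (M k) k; pose U k := uu (M k) k.
have f1 k x : s k x -> (B k <= x)%N.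
  by have [_ _ sub] := Hs k; move=> /sub; rewrite /sigma /= size_mkseq.
have f2 i k x : (i < k)%N -> s i x -> (x < M k)%N.
  move=> ik six; apply: (Hmh (mkseq s k) i); rewrite ?size_mkseq ?nth_mkseq //.
  by have [] := Hs i.
have f3 k : (M k <= B k)%N by have [] := Huu (M k) k.
have f4 i k : (i < k)%N -> (B i < M k)%N.
  by move=> ik; have [_ [x sx] _] := Hs i; apply: (leq_ltn_trans (f1 _ _ sx)); exact: f2 ik sx.
have U0 i x : (M i <= x < B i)%N -> ~ (\bigcup_k s k) x.
  move=> /andP[mx xb] [j _ sjx].
  case: (ltnP j i) => [ji|ij].
    by have := f2 _ _ _ ji sjx; rewrite ltnNge mx.
  have : (B i <= x)%N.
    move: ij; rewrite leq_eqVlt => /predU1P[->|ij]; first exact: f1 sjx.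
    apply: leq_trans (f1 _ _ sjx); apply: ltnW; apply: (leq_trans (f4 _ _ ij)); exact: f3.
  by rewrite leqNgt xb.
pose C := \bigcup_k s k `|` [set x | exists k, (M k <= x < B k)%N /\ U k x].
have FC : F C by apply: (F_sup HF FU) => x hx; left.
have [n _ NC] := FN _ (ex_intro2 _ _ C FC erefl).
have [_ H] := Huu (M n) n.
apply: (H (char_of C)) NC => //.
move=> i /andP[mi ib]; rewrite /char_of; apply: asbool_equiv_eqP; first exact: idP.
split => [[h|[k [/andP[mk kb] Uk]]]|Ui].
    by exfalso; apply: (U0 n i _ h); rewrite mi ib.
  case: (ltngtP k n) => [kn|nk|<-] //.
    by have := f4 _ _ kn; rewrite ltnNge (leq_trans mi (ltnW kb)).
  by have := f4 _ _ nk; rewrite ltnNge (leq_trans mk (ltnW ib)).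
by right; exists n; rewrite mi ib.
Qed.

Definition setof (l : seq nat) : set nat := [set x | x \in l].

Lemma fin_max (T : finType) (g : T -> nat) : exists M, forall t, (g t <= M)%N.
Proof. by exists (\max_t g t) => t; exact: leq_bigmax. Qed.

Definition tmask a (t : a.-tuple bool) : seq nat := mask t (iota 0 a).

Lemma lift_tuples a (hs : seq (seq nat)) :
  (forall l, l \in hs -> subseq l (iota 0 a)) ->
  exists ts : seq (a.-tuple bool), hs = map (@tmask a) ts.
Proof.
elim: hs => [|l hs IH] H; first by exists [::].
have [ts ->] : exists ts : seq (a.-tuple bool), hs = map (@tmask a) ts.
  by apply: IH => l' l'in; apply: H; rewrite inE l'in orbT.
have /subseqP[m sm ->] := H l (mem_head _ _).
have sm' : size m == a by rewrite sm size_iota.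
by exists (Tuple sm' :: ts).
Qed.

Lemma hist_max (bnd : seq (seq nat) -> nat) a : exists M, forall hs,
  (size hs <= a)%N -> (forall l, l \in hs -> subseq l (iota 0 a)) -> (bnd hs <= M)%N.
Proof.
exists (\max_(k < a.+1) \max_(ts : k.-tuple (a.-tuple bool))
          bnd (map (@tmask a) ts)) => hs sa Hs.
have [ts E] := lift_tuples Hs; rewrite E.
have szk : (size ts < a.+1)%N by rewrite ltnS; move: sa; rewrite E size_map.
apply: leq_trans (leq_bigmax (Ordinal szk)) => /=.
by apply: leq_trans (leq_bigmax (in_tuple ts)).
Qed.

Lemma nonmeager_interval F (aj : nat -> nat) :
  (forall j, (j <= aj j)%N) -> ~ meager_family F ->
  exists2 A, F A & forall n, exists j, (n <= j)%N /\
    forall x, A x -> ~ (aj j <= x < aj j.+1)%N.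
Proof.
move=> ajj nM; apply: contrapT => nex; apply: nM.
pose N n : set cantor_space :=
  [set c | forall j, (n <= j)%N -> exists x, c x /\ (aj j <= x < aj j.+1)%N].
exists N; split.
  move=> n; rewrite /nowhere_dense; apply/seteqP; split => // c /= hc.
  have [b sub] := nbhs_cyl hc.
  pose j := maxn n b.
  pose y : cantor_space := fun i => if (i < b)%N then c i else false.
  have cy : closure (N n) y by apply: sub => i ib; rewrite /y ib.
  have [d [Nd dy]] := cy _ (cyl_nbhs y (aj j.+1)).
  have [x [dx /andP[lx xu]]] := Nd j (leq_maxl _ _).
  move: dx; rewrite dy // /y; case: ifP => // xb.
  have : (b <= x)%N by apply: leq_trans lx; apply: leq_trans (ajj j); exact: leq_maxr.
  by rewrite leqNgt xb.
move=> _ [A FA <-] /=.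
apply: contrapT => nA; apply: nex; exists A => // n.
apply: contrapT => nj; apply: nA; exists n => // j nj'.
apply: contrapT => nx; apply: nj; exists j; split => // x Ax xin.
apply: nx; exists x; split => //; rewrite /char_of; exact: asboolT.
Qed.

Lemma nonmeagerP_noIwin F : proper_filter_omega F -> P_filter F ->
  ~ meager_family F -> ~ exists sigma, I_winning_strategy F sigma.
Proof.
move=> HF PF nM [sigma [Isig Wsig]].
pose Xn n := if (unpickle n : option (seq (seq nat))) is Some hs
  then sigma (map setof hs) else setT.
have FXn n : F (Xn n) by rewrite /Xn; case: unpickle => [hs|]; [exact: Isig| exact: F_T].
have [X FX HX] := PF Xn FXn.
have hbnd hs : exists m, forall x, (m <= x)%N -> X x -> sigma (map setof hs) x.
  have [m Hm] := fin_bound (HX (pickle hs)).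
  exists m => x mx Xx; apply: contrapT => nsx.
  have : (x < m)%N by apply: Hm; split => //; rewrite /Xn pickleK.
  by rewrite ltnNge mx.
have [bnd Hbnd] := choice hbnd.
have [G HG] := choice (hist_max bnd).
pose aj j := iter j (fun x => maxn x.+1 (G x)) 0.
have ajS j : aj j.+1 = maxn (aj j).+1 (G (aj j)) by [].
have ajlt j : (aj j < aj j.+1)%N by rewrite ajS leq_maxl.
have ajG j : (G (aj j) <= aj j.+1)%N by rewrite ajS leq_maxr.
have ajj j : (j <= aj j)%N by elim: j => // j IH; apply: leq_ltn_trans IH (ajlt j).
have ajmono i j : (i <= j)%N -> (aj i <= aj j)%N.
  elim: j => [|j IH]; first by rewrite leqn0 => /eqP ->.
  rewrite leq_eqVlt => /predU1P[-> //|/IH h]; exact: leq_trans h (ltnW (ajlt j)).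
have [A FA HA] := nonmeager_interval ajj nM.
pose Y := A `&` X.
have FY : F Y by exact: F_I.
pose J j := forall x, Y x -> ~ (aj j <= x < aj j.+1)%N.
have HJ n : exists j, (n <= j)%N /\ J j.
  have [j [nj Hj]] := HA n; exists j; split => // x [Ax _]; exact: Hj.
have hnxt j : exists j', [/\ (j < j')%N, J j' & exists y, Y y /\ (aj j.+1 <= y < aj j')%N].
  have [y [Yy ly]] : exists y, Y y /\ (aj j.+1 <= y)%N.
    apply: contrapT => ne; apply: (F_inf HF FY).
    apply: (@sub_finite_set _ _ `I_(aj j.+1)); last exact: finite_II.
    move=> y Yy /=; rewrite ltnNge; apply/negP => ly; apply: ne; by exists y.
  have [j' [lj' Jj']] := HJ (maxn j.+1 y.+1).
  exists j'; split => //; first by apply: leq_trans lj'; exact: leq_maxl.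
  exists y; split => //; rewrite ly /=.
  apply: leq_trans (ajj j'); apply: leq_trans lj'; exact: leq_maxr.
have [nxt Hnxt] := choice hnxt.
have [j0 [_ Jj0]] := HJ 0%N.
pose jj k := iter k nxt j0.
have jjS k : jj k.+1 = nxt (jj k) by [].
have Jjj k : J (jj k) by case: k => // k; rewrite jjS; have [] := Hnxt (jj k).
have jjlt k : (jj k < jj k.+1)%N by rewrite jjS; have [] := Hnxt (jj k).
have jjk k : (k <= jj k)%N by elim: k => // k IH; apply: leq_ltn_trans IH (jjlt k).
have jjmono i j : (i <= j)%N -> (jj i <= jj j)%N.
  elim: j => [|j IH]; first by rewrite leqn0 => /eqP ->.
  rewrite leq_eqVlt => /predU1P[-> //|/IH h]; exact: leq_trans h (ltnW (jjlt j)).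
pose s k := [set y | Y y /\ (aj (jj k).+1 <= y < aj (jj k.+1))%N].
have sbound i x : s i x -> (x < aj (jj i.+1))%N by move=> [_ /andP[]].
have Hs : II_legal_vs sigma s.
  move=> k; split.
  - apply: (@sub_finite_set _ _ `I_(aj (jj k.+1))); last exact: finite_II.
    by move=> x /sbound.
  - have [_ _ [y [Yy hy]]] := Hnxt (jj k); exists y; split => //; by rewrite jjS.
  pose a := aj (jj k).
  pose hs := mkseq (fun i => [seq x <- iota 0 a | `[< s i x >]]) k.
  have E : map setof hs = mkseq s k.
    rewrite /hs /mkseq -map_comp; apply/eq_in_map => i; rewrite mem_iota => /andP[_ ik] /=.
    apply/seteqP; split => x /=; rewrite /setof /= mem_filter mem_iota /=.
      by move=> /andP[/asboolP].
    move=> six; rewrite (asboolT six) /= add0n (leq_trans (sbound _ _ six)) //.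
    by apply: ajmono; exact: jjmono ik.
  move=> y [Yy /andP[ly yu]].
  rewrite -E; apply: (Hbnd hs y); last by case: Yy.
  apply: leq_trans ly; apply: leq_trans (ajG _); apply: HG.
    by rewrite size_mkseq; exact: leq_trans (jjk k) (ajj _).
  by move=> l; rewrite /hs /mkseq => /mapP[i _ ->]; exact: filter_subseq.
have cover k y : Y y -> (aj (jj 0).+1 <= y < aj (jj k).+1)%N -> (\bigcup_i s i) y.
  elim: k => [|k IH] Yy /andP[ly yu]; first by rewrite ltnNge ly in yu.
  case: (ltnP y (aj (jj k).+1)) => [yk|ky]; first by apply: IH => //; rewrite ly yk.
  case: (ltnP y (aj (jj k.+1))) => [yk1|ky1].
    by exists k => //; split => //; rewrite ky yk1.
  by exfalso; apply: (Jjj k.+1 y Yy); rewrite ky1 yu.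
have Fcof : F [set y | (aj (jj 0).+1 <= y)%N].
  apply: (F_cof HF); apply: (@sub_finite_set _ _ `I_(aj (jj 0).+1)); last exact: finite_II.
  by move=> x /= /negP; rewrite -ltnNge.
apply: (Wsig s Hs); apply: (F_sup HF (F_I HF FY Fcof)).
move=> y [Yy ly]; apply: (cover y) => //; rewrite ly /=.
by rewrite leq_max ltnS (leq_trans (jjk y) (ajj _)).
Qed.
Definition guard (u : set nat) : set nat :=
  if pselect (finite_set u) then ~` u else setT.

Lemma F_guard F u : proper_filter_omega F -> F (guard u).
Proof.
move=> HF; rewrite /guard; case: pselect => [fu|nfu]; last exact: F_T.
by apply: (F_cof HF); rewrite setCK.
Qed.

Section PartD.
Variable F : set (set nat).
Hypothesis HF : proper_filter_omega F.
Variable tau : seq (set nat) -> set nat.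
Hypothesis Htau : II_strategy F tau.

Definition stepD (p : seq (set nat) * seq (set nat) * set nat) :=
  let: (hA, hB, u) := p in
  let xa := guard u in let a := tau (rcons hA xa) in
  let xb := guard (u `|` a) in let b := tau (rcons hB xb) in
  (rcons hA xa, rcons hB xb, u `|` a `|` b).

Definition stD k := iter k stepD ([::], [::], set0).
Definition XA k := nth setT (stD k.+1).1.1 k.
Definition XB k := nth setT (stD k.+1).1.2 k.
Definition uD k := (stD k).2.

Lemma stD_size k : size (stD k).1.1 = k /\ size (stD k).1.2 = k.
Proof.
elim: k => [//|k [IH1 IH2]]; rewrite /stD iterS -/(stD k).
by case: (stD k) IH1 IH2 => [[hA hB] u] /= h1 h2; rewrite /stepD /= !size_rcons h1 h2.
Qed.

Lemma stD_mk k : (stD k).1.1 = mkseq XA k /\ (stD k).1.2 = mkseq XB k.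
Proof.
elim: k => [//|k [IH1 IH2]].
have [s1 s2] := stD_size k.
rewrite !mkseqS -IH1 -IH2 /XA /XB /stD iterS -/(stD k).
move: s1 s2; case: (stD k) => [[hA hB] u] /= s1 s2; rewrite /stepD /=.
by rewrite !nth_rcons s1 s2 ltnn eqxx.
Qed.

Definition aD k := tau (mkseq XA k.+1).
Definition bD k := tau (mkseq XB k.+1).

Lemma XA_E k : XA k = guard (uD k).
Proof.
have [s1 _] := stD_size k.
rewrite /XA /uD /stD iterS -/(stD k); move: s1.
by case: (stD k) => [[hA hB] u] /= s1; rewrite /stepD /= nth_rcons s1 ltnn eqxx.
Qed.

Lemma XB_E k : XB k = guard (uD k `|` aD k).
Proof.
have [s1 s2] := stD_size k; have [m1 _] := stD_mk k.
rewrite /aD mkseqS -m1 XA_E /XB /uD /stD iterS -/(stD k); move: s1 s2.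
by case: (stD k) => [[hA hB] u] /= s1 s2; rewrite /stepD /= nth_rcons s2 ltnn eqxx.
Qed.

Lemma uD_S k : uD k.+1 = uD k `|` aD k `|` bD k.
Proof.
have [m1 m2] := stD_mk k.
rewrite {1}/uD /stD iterS -/(stD k).
rewrite /bD mkseqS -m2 XB_E /aD mkseqS -m1 XA_E /uD.
by case: (stD k) => [[hA hB] u].
Qed.

Lemma XA_F n : F (XA n).
Proof. by rewrite XA_E; exact: F_guard. Qed.
Lemma XB_F n : F (XB n).
Proof. by rewrite XB_E; exact: F_guard. Qed.

Lemma LA k : II_legal_move (aD k) (XA k).
Proof. exact: (Htau XA_F k). Qed.
Lemma LB k : II_legal_move (bD k) (XB k).
Proof. exact: (Htau XB_F k). Qed.

Lemma uD_fin k : finite_set (uD k).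
Proof.
elim: k => [|k IH]; first exact: finite_set0.
have [fa _ _] := LA k; have [fb _ _] := LB k.
by rewrite uD_S !finite_setU; do !split.
Qed.

Lemma XA_C k : XA k = ~` uD k.
Proof. by rewrite XA_E /guard; case: pselect => // nf; case: (nf (uD_fin k)). Qed.
Lemma XB_C k : XB k = ~` (uD k `|` aD k).
Proof.
rewrite XB_E /guard; case: pselect => // nf; case: nf; rewrite finite_setU; split.
  exact: uD_fin.
by have [] := LA k.
Qed.

Lemma uD_mono i j : (i <= j)%N -> uD i `<=` uD j.
Proof.
elim: j => [|j IH]; first by rewrite leqn0 => /eqP ->.
rewrite leq_eqVlt => /predU1P[-> //|/IH h] x /h ux.
by rewrite uD_S; left; left.
Qed.

Lemma aD_u i : aD i `<=` uD i.+1.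
Proof. by move=> x ax; rewrite uD_S; left; right. Qed.
Lemma bD_u i : bD i `<=` uD i.+1.
Proof. by move=> x bx; rewrite uD_S; right. Qed.

Lemma abD_disj i j x : aD i x -> bD j x -> False.
Proof.
move=> ax bx.
have [_ _ sa] := LA i; have [_ _ sb] := LB j.
case: (leqP i j) => [ij|ji].
  have := sb _ bx; rewrite XB_C; apply.
  move: ij; rewrite leq_eqVlt => /predU1P[<-|ij]; first by right.
  by left; apply: (uD_mono ij); exact: aD_u.
have := sa _ ax; rewrite XA_C; apply.
by apply: (uD_mono ji); exact: bD_u.
Qed.

Lemma no_II_win : ~ II_winning_strategy F tau.
Proof.
move=> [_ W].
have hA := W _ XA_F; have hB := W _ XB_F.
apply: (F_not0 HF); apply: (F_sup HF (F_I HF hA hB)).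
by move=> x [[i _ ax] [j _ bx]]; exact: (abD_disj ax bx).
Qed.

End PartD.
Lemma notP_Iwin F : proper_filter_omega F -> ~ P_filter F ->
  exists sigma, I_winning_strategy F sigma.
Proof.
move=> HF nP.
have [Xn [HXn H]] : exists Xn : nat -> set nat, (forall n, F (Xn n)) /\
    forall X, F X -> exists n, ~ finite_set (X `\` Xn n).
  apply: contrapT => nex; apply: nP => Xn HXn; apply: contrapT => nX.
  apply: nex; exists Xn; split => // X FX.
  apply: contrapT => nn; apply: nX; exists X => // n; apply: contrapT => h.
  by apply: nn; exists n.
pose Pre k := [set x | forall i, (i <= k)%N -> Xn i x].
have FPre k : F (Pre k).
  elim: k => [|k IH].
    by apply: (F_sup HF (HXn 0)) => x h i; rewrite leqn0 => /eqP ->.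
  apply: (F_sup HF (F_I HF IH (HXn k.+1))) => x [h1 h2] i.
  by rewrite leq_eqVlt => /predU1P[-> //|]; rewrite ltnS; exact: h1.
exists (fun h => Pre (size h)); split => // s Hs FU.
have [n nf] := H _ FU; apply: nf.
apply: (@sub_finite_set _ _ (\bigcup_(k in `I_n) s k)).
  move=> x [[k _ skx] nx]; exists k => //=.
  rewrite ltnNge; apply/negP => nk; apply: nx.
  have [_ _ sub] := Hs k; have := sub _ skx; rewrite /= size_mkseq; apply.
  exact: nk.
by apply: bigcup_finite; [exact: finite_II | move=> k _; have [] := Hs k].
Qed.

Theorem theorem2p15 (F : set (set nat)) :
  proper_filter_omega F ->
  ((~ exists sigma, I_winning_strategy F sigma) <->
     (P_filter F /\ ~ meager_family F)) /\
  (~ exists tau, II_winning_strategy F tau).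
Proof.
move=> HF; split; last by move=> [tau [Ht Hw]]; exact: (no_II_win HF Ht (conj Ht Hw)).
split.
- move=> nI; split.
    by apply: contrapT => nP; apply: nI; exact: notP_Iwin.
  by move=> M; apply: nI; exact: meager_Iwin.
- by move=> [PF nM]; exact: nonmeagerP_noIwin.
Qed.
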